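(* Let $\alpha\ge1$, $\beta$ odd, and let ${\cal C}=\langle (b\mid 0),(\ell\mid fh+2f)\rangle\subseteq R_{\alpha,\beta}$ be a $\mathbb{Z}_2\mathbb{Z}_4$-additive cyclic code of length $\alpha+\beta$, where $f,h,g\in\mathbb{Z}_4[x]$ with $fhg=x^\beta-1$, $b\in\mathbb{Z}_2[x]$ divides $x^\alpha-1$, and $\ell\in\mathbb{Z}_2[x]/(x^\alpha-1)$. If $g=1$ or $g=x^s-1$ for some positive divisor $s$ of $\beta$, then $\Phi({\cal C})$ is a linear binary code.
   Context: $R_{\alpha,\beta}=\mathbb{Z}_2[x]/(x^\alpha-1)\times\mathbb{Z}_4[x]/(x^\beta-1)$, identified with $\mathbb{Z}_2^\alpha\times\mathbb{Z}_4^\beta$ via coefficient vectors; it is a $\mathbb{Z}_4[x]$-module via $p\star(b\mid a)=(\tilde pb\mid pa)$, $\tilde p$ the reduction of $p$ mod 2. A $\mathbb{Z}_2\mathbb{Z}_4$-additive cyclic code is a $\mathbb{Z}_4[x]$-submodule; $\langle\cdot\rangle$ is the generated submodule. Gray map: for $u'\in\mathbb{Z}_4^n$ with $u'_i=\tilde u'_i+2\hat u'_i$, $\tilde u'_i,\hat u'_i\in\{0,1\}$, $\phi(u')=(\hat u'_0,\dots,\hat u'_{n-1},\tilde u'_0+\hat u'_0,\dots,\tilde u'_{n-1}+\hat u'_{n-1})$, and $\Phi(u\mid u')=(u\mid\phi(u'))\in\mathbb{Z}_2^{\alpha+2\beta}$. Linear means a $\mathbb{Z}_2$-subspace. *)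

(* Defs.v *)
From mathcomp Require Import all_boot all_order all_algebra.
Set Implicit Arguments. Unset Strict Implicit. Unset Printing Implicit Defensive.
Import GRing.Theory.
Local Open Scope ring_scope.

(* Z_2 is 'F_2 (a field, so that polynomial divisibility is available),
   Z_4 is 'Z_4 = {0,1,2,3}. *)

Definition red4 (x : 'Z_4) : 'F_2 := (nat_of_ord x)%:R.

(* coefficient vector of the class of p in R[x]/(x^n - 1):
   coordinate j = sum of the coefficients p_i with i = j (mod n) *)
Definition polyvec (R : nzRingType) (n : nat) (p : {poly R}) : 'rV[R]_n :=
  \row_(j < n) \sum_(i < size p | (i %% n == j)%N) p`_i.

Definition vecpoly (R : nzRingType) (n : nat) (v : 'rV[R]_n) : {poly R} :=
  \sum_(i < n) v 0 i *: 'X^i.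

Definition Ramb (alpha beta : nat) : Type := ('rV['F_2]_alpha * 'rV['Z_4]_beta)%type.

Definition Radd alpha beta (u v : Ramb alpha beta) : Ramb alpha beta :=
  (u.1 + v.1, u.2 + v.2).

(* Z_4[x]-module action  p * (b | a) = (~p b | p a)  (products mod x^n - 1) *)
Definition act alpha beta (p : {poly 'Z_4}) (u : Ramb alpha beta) : Ramb alpha beta :=
  (polyvec alpha (map_poly red4 p * vecpoly u.1),
   polyvec beta (p * vecpoly u.2)).

Definition gen2 alpha beta (g1 g2 : Ramb alpha beta) : Ramb alpha beta -> Prop :=
  fun z => exists p q : {poly 'Z_4}, z = Radd (act p g1) (act q g2).

Definition hatb (x : 'Z_4) : 'F_2 := (nat_of_ord x %/ 2)%N%:R.
Definition tilb (x : 'Z_4) : 'F_2 := (nat_of_ord x %% 2)%N%:R.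

Definition phi4 n (u : 'rV['Z_4]_n) : 'rV['F_2]_(n + n) :=
  row_mx (\row_i hatb (u 0 i)) (\row_i (tilb (u 0 i) + hatb (u 0 i))).

Definition Gray alpha beta (z : Ramb alpha beta) : 'rV['F_2]_(alpha + (beta + beta)) :=
  row_mx z.1 (phi4 z.2).

Definition Gray_image alpha beta (C : Ramb alpha beta -> Prop) :
  'rV['F_2]_(alpha + (beta + beta)) -> Prop :=
  fun w => exists z, C z /\ w = Gray z.

Definition linear_binary N (S : 'rV['F_2]_N -> Prop) : Prop :=
  [/\ S 0, (forall u v, S u -> S v -> S (u + v)) & (forall (c : 'F_2) u, S u -> S (c *: u))].

(* Main.v *)
Require Import Defs.
From mathcomp Require Import all_boot all_order all_algebra.
From mathcomp Require Import zify.
Import GRing.Theory.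
Local Open Scope ring_scope.

Section PV.
Variable R : nzRingType.
Implicit Types p q r : {poly R}.

Lemma polyvecE n N p : (size p <= N)%N -> forall (j : 'I_n),
  polyvec n p 0 j = \sum_(i < N | (i %% n == j)%N) p`_i.
Proof.
move=> hN j; rewrite /polyvec [LHS]mxE (@big_ord_widen_cond _ 0 +%R _ N (fun i => (i %% n == j)%N) (fun i => p`_i) hN).
rewrite big_mkcond [RHS]big_mkcond; apply: eq_bigr => i _.
case: (i %% n == j)%N => //=; case: ltnP => // hi.
by rewrite nth_default.
Qed.
Arguments polyvecE {n N p}.

Lemma polyvecD n p q : polyvec n (p + q) = polyvec n p + polyvec n q.
Proof.
apply/rowP => j; rewrite [RHS]mxE.
have hp : (size p <= maxn (size p) (size q))%N by rewrite leq_maxl.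
have hq : (size q <= maxn (size p) (size q))%N by rewrite leq_maxr.
have hpq : (size (p + q)%R <= maxn (size p) (size q))%N by exact: size_polyD.
rewrite -[polyvec n (p+q) 0 j]/(polyvec n (p+q) 0 j).
rewrite (polyvecE hpq j) (polyvecE hp j) (polyvecE hq j) -big_split /=.
by apply: eq_bigr => i _; rewrite coefD.
Qed.

Lemma polyvecN n p : polyvec n (- p) = - polyvec n p.
Proof.
apply/rowP => j; rewrite [RHS]mxE.
have hp : (size (- p)%R <= size p)%N by rewrite size_polyN.
rewrite (polyvecE hp j) (polyvecE (leqnn _) j) -sumrN.
by apply: eq_bigr => i _; rewrite coefN.
Qed.

Lemma polyvec0 n : polyvec n (0 : {poly R}) = 0.
Proof. by apply/rowP => j; rewrite (polyvecE (leqnn _) j) size_poly0 big_ord0 mxE. Qed.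

Lemma polyvecB n p q : polyvec n (p - q) = polyvec n p - polyvec n q.
Proof. by rewrite polyvecD polyvecN. Qed.

Lemma polyvecMn n p k : polyvec n (p *+ k) = polyvec n p *+ k.
Proof. by elim: k => [|k IH]; rewrite ?mulr0n ?polyvec0 // !mulrS polyvecD IH. Qed.

Lemma polyvec_small n p : (size p <= n)%N -> forall j : 'I_n, polyvec n p 0 j = p`_j.
Proof.
move=> hp j; rewrite (polyvecE hp j).
rewrite (big_pred1 j) // => i /=.
by rewrite modn_small.
Qed.
Arguments polyvec_small {n p}.

Lemma polyvec_mulXn n p : polyvec n (p * 'X^n) = polyvec n p.
Proof.
apply/rowP => j.
have hs : (size (p * 'X^n)%R <= n + size p)%N.
  apply: leq_trans (size_polyMleq _ _) _; rewrite size_polyXn addnS /= addnC //.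
rewrite (polyvecE hs j) (polyvecE (leqnn _) j).
rewrite -(big_mkord (fun i => (i %% n == j)%N) (fun i => (p * 'X^n)`_i)).
rewrite -(big_mkord (fun i => (i %% n == j)%N) (fun i => p`_i)).
rewrite (big_cat_nat (leq0n n) (leq_addr _ _)) /=.
rewrite big1_seq ?add0r; last by move=> i /andP[_]; rewrite mem_iota /= add0n subn0 => hi; rewrite coefMXn hi.
rewrite -{1}(add0n n) big_addn addKn.
apply: eq_big => [i|i _]; first by rewrite modnDr.
by rewrite coefMXn ltnNge leq_addl /= addnK.
Qed.

Lemma polyvec_mulXn1 n p : polyvec n (p * ('X^n - 1)) = 0.
Proof. by rewrite mulrBr mulr1 polyvecB polyvec_mulXn subrr. Qed.

Lemma coef_vecpoly n (v : 'rV[R]_n) (j : 'I_n) : (vecpoly v)`_j = v 0 j.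
Proof.
by rewrite /vecpoly coef_sumMXn (big_pred1 j).
Qed.

Lemma coef_vecpoly_ge n (v : 'rV[R]_n) k : (n <= k)%N -> (vecpoly v)`_k = 0.
Proof.
move=> hk; rewrite /vecpoly coef_sumMXn big1 // => i /eqP ei.
by move: (ltn_ord i); rewrite ei ltnNge hk.
Qed.

Lemma size_vecpoly n (v : 'rV[R]_n) : (size (vecpoly v) <= n)%N.
Proof. by apply/leq_sizeP => k hk; rewrite coef_vecpoly_ge. Qed.
Arguments size_vecpoly {n}.

Lemma polyvec_vecpoly n (v : 'rV[R]_n) : polyvec n (vecpoly v) = v.
Proof.
by apply/rowP => j; rewrite (polyvec_small (size_vecpoly v)) coef_vecpoly.
Qed.

Lemma polyvec_eq0 n r : (0 < n)%N -> polyvec n r = 0 ->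
  exists D, r = D * ('X^n - 1).
Proof.
move=> n0 hr.
have mon := monic_Xn_sub_1 R n0.
have e := Pdiv.RingMonic.rdivp_eq mon r.
set M := Pdiv.CommonRing.rmodp r _ in e.
have hM : (size M <= n)%N.
  have := Pdiv.Ring.ltn_rmodp r ('X^n - 1).
  rewrite size_Xn_sub_1 // ltnS => ->; by rewrite -size_poly_eq0 size_Xn_sub_1.
have pM : polyvec n M = 0.
  by rewrite -[M](addKr (Pdiv.CommonRing.rdivp r ('X^n - 1) * ('X^n - 1))) -e polyvecD polyvecN
       polyvec_mulXn1 oppr0 add0r.
exists (Pdiv.CommonRing.rdivp r ('X^n - 1)).
suff hM0 : M = 0 by rewrite {1}e hM0 addr0.
apply/polyP => k; rewrite coef0; case: (ltnP k n) => hk.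
  by have := congr1 (fun v : 'rV[R]_n => v 0 (Ordinal hk)) pM; rewrite (polyvec_small hM) /= mxE.
by rewrite nth_default // (leq_trans hM).
Qed.

Lemma polyvec_mull n q r r' : (0 < n)%N -> polyvec n r = polyvec n r' ->
  polyvec n (q * r) = polyvec n (q * r').
Proof.
move=> n0 e; have [D hD] : exists D, r - r' = D * ('X^n - 1).
  by apply: polyvec_eq0 => //; rewrite polyvecB e subrr.
apply/eqP; rewrite -subr_eq0 -polyvecB -mulrBr hD mulrA polyvec_mulXn1 //.
Qed.

End PV.
Arguments polyvecE {R n N p}.
Arguments polyvec_small {R n p}.
Arguments size_vecpoly {R n}.
Lemma hatbD (a b : 'Z_4) : hatb a + hatb b = hatb (a + b + (a * b) *+ 2).
Proof.
by case: a => [[|[|[|[|//]]]] ?]; case: b => [[|[|[|[|//]]]] ?]; apply/val_inj.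
Qed.
Lemma tilbD (a b : 'Z_4) : (tilb a + hatb a) + (tilb b + hatb b) =
   tilb (a + b + (a * b) *+ 2) + hatb (a + b + (a * b) *+ 2).
Proof.
by case: a => [[|[|[|[|//]]]] ?]; case: b => [[|[|[|[|//]]]] ?]; apply/val_inj.
Qed.
Lemma red4D (a b : 'Z_4) : red4 (a + b) = red4 a + red4 b.
Proof.
by case: a => [[|[|[|[|//]]]] ?]; case: b => [[|[|[|[|//]]]] ?]; apply/val_inj.
Qed.
Definition mm (x y : 'Z_4) : 'Z_4 := if (x == 2%:R) && (y == 2%:R) then 2%:R else 0.
Lemma mmE (a b : 'Z_4) : (a * b) *+ 2 = mm (a *+ 2) (b *+ 2).
Proof.
by case: a => [[|[|[|[|//]]]] ?]; case: b => [[|[|[|[|//]]]] ?]; apply/val_inj.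
Qed.
Lemma mm2 (x y : 'Z_4) : mm x y *+ 2 = 0.
Proof. by rewrite /mm; case: ifP => _; apply/val_inj. Qed.
Lemma red4mm (x y : 'Z_4) : red4 (mm x y) = 0.
Proof. by rewrite /mm; case: ifP => _; apply/val_inj. Qed.
Lemma red40 : red4 0 = 0. Proof. by apply/val_inj. Qed.
Lemma hatb0 : hatb 0 = 0. Proof. by apply/val_inj. Qed.
Lemma tilb0 : tilb 0 = 0. Proof. by apply/val_inj. Qed.
Lemma Z4_4 (a : 'Z_4) : a *+ 4 = 0.
Proof. by case: a => [[|[|[|[|//]]]] ?]; apply/val_inj. Qed.
Lemma F2_cases (c : 'F_2) : c = 0 \/ c = 1.
Proof. by case: c => [[|[|//]] ?]; [left|right]; apply/val_inj. Qed.
Section Per.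
Variable R : comNzRingType.
Variables (s m : nat).
Hypothesis s0 : (0 < s)%N.
Definition Pp : {poly R} := \sum_(k < m) 'X^(k * s).

Lemma coef_termK (A : {poly R}) k i : (size A <= s)%N -> (k.+1 * s <= i)%N ->
  (A * 'X^(k * s))`_i = 0.
Proof.
move=> hA hk; rewrite coefMXn; case: ifP => // _.
rewrite nth_default //; apply: (leq_trans hA).
rewrite mulSn in hk; lia.
Qed.

Lemma coef_AP (A : {poly R}) i : (size A <= s)%N ->
  (A * Pp)`_i = if (i < m * s)%N then A`_(i %% s) else 0.
Proof.
move=> hA; rewrite /Pp mulr_sumr coef_sum; case: ifP => hi.
  have hk0 : (i %/ s < m)%N by rewrite ltn_divLR.
  rewrite (bigD1 (Ordinal hk0)) //= big1 ?addr0.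
    rewrite coefMXn ltnNge leq_trunc_div /=.
    by rewrite {1}(divn_eq i s) addKn.
  move=> k /eqP hk; case: (ltnP i (k * s)) => hks; first by rewrite coefMXn hks.
  apply: coef_termK => //.
  have : (k <= i %/ s)%N by rewrite leq_divRL.
  rewrite leq_eqVlt => /orP[/eqP e|hlt]; first by case: hk; apply: val_inj.
  by apply: leq_trans (leq_trunc_div i s); rewrite leq_mul2r hlt orbT.
rewrite big1 // => k _; apply: coef_termK => //.
apply: leq_trans (_ : m * s <= i)%N; last by rewrite leqNgt hi.
by rewrite leq_mul2r ltn_ord orbT.
Qed.

Lemma size_AP (A : {poly R}) : (size A <= s)%N -> (size (A * Pp)%R <= m * s)%N.
Proof. by move=> hA; apply/leq_sizeP => j hj; rewrite coef_AP // ltnNge hj. Qed.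

Lemma PpM : Pp * ('X^s - 1) = 'X^(m * s) - 1.
Proof.
rewrite /Pp mulr_suml.
have -> : \sum_(i < m) 'X^(i * s) * ('X^s - 1) =
          \sum_(i < m) ('X^(i.+1 * s) - 'X^(i * s)) :> {poly R}.
  by apply: eq_bigr => i _; rewrite mulrBr mulr1 -exprD mulSn addnC.
rewrite -(big_mkord xpredT (fun i => 'X^(i.+1 * s) - 'X^(i * s))).
by rewrite (telescope_sumr (fun i => 'X^(i * s))) // mul0n expr0.
Qed.

End Per.

Lemma poly4 (p : {poly 'Z_4}) : p *+ 4 = 0.
Proof. by apply/polyP => i; rewrite coefMn Z4_4 coef0. Qed.

Lemma map_red4D (p q : {poly 'Z_4}) :
  map_poly red4 (p + q) = map_poly red4 p + map_poly red4 q.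
Proof. by apply/polyP => i; rewrite coefD !coef_map_id0 ?red40 // coefD red4D. Qed.

Lemma vecpoly0 (R : nzRingType) n : vecpoly (0 : 'rV[R]_n) = 0.
Proof. by rewrite /vecpoly big1 // => i _; rewrite mxE scale0r. Qed.

Lemma GrayD alpha beta (z z' : Ramb alpha beta) :
  Gray z + Gray z' = Gray (z.1 + z'.1, z.2 + z'.2 + \row_j ((z.2 0 j * z'.2 0 j) *+ 2)).
Proof.
rewrite /Gray /phi4 !add_row_mx; congr row_mx; congr row_mx; apply/rowP => j;
  rewrite !mxE.
  exact: hatbD.
exact: tilbD.
Qed.

Lemma Gray0 alpha beta : Gray ((0, 0) : Ramb alpha beta) = 0.
Proof.
rewrite /Gray /phi4.
have -> : \row_i hatb ((0 : 'rV['Z_4]_beta) 0 i) = 0.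
  by apply/rowP => i; rewrite !mxE hatb0.
have -> : \row_i (tilb ((0 : 'rV['Z_4]_beta) 0 i) + hatb ((0 : 'rV['Z_4]_beta) 0 i)) = 0.
  by apply/rowP => i; rewrite !mxE hatb0 tilb0 addr0.
by rewrite !row_mx0.
Qed.

Lemma claim (beta : nat) (f h g : {poly 'Z_4}) (q1 q2 : {poly 'Z_4}) :
  odd beta -> f * h * g = 'X^beta - 1 ->
  (g = 1 \/ exists s : nat, [/\ (0 < s)%N, (s %| beta)%N & g = 'X^s - 1]) ->
  let w := f * h + 2%:R * f in
  exists Q : {poly 'Z_4}, map_poly red4 Q = 0 /\
    polyvec beta (Q * w) =
    \row_j ((polyvec beta (q1 * w) 0 j * polyvec beta (q2 * w) 0 j) *+ 2).
Proof.
move=> ob hfhg hg w.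
have b0 : (0 < beta)%N by move: ob; case: (beta).
have U2 : forall q, polyvec beta (q * w) *+ 2 = polyvec beta ((q * (f * h)) *+ 2).
  move=> q; rewrite -polyvecMn /w mulrDr mulrnDl; congr polyvec.
  by rewrite [q * (2%:R * f)]mulrCA mulr_natl -mulrnA poly4 addr0.
have key : forall j, (polyvec beta (q1 * w) 0 j * polyvec beta (q2 * w) 0 j) *+ 2 =
   mm ((polyvec beta (q1 * w) *+ 2) 0 j) ((polyvec beta (q2 * w) *+ 2) 0 j).
  by move=> j; rewrite !mulmxnE mmE.
case: hg => [g1|[s [s0 sb gs]]].
  exists 0; rewrite map_poly0 mul0r polyvec0; split => //.
  apply/rowP => j; rewrite [RHS]mxE key U2.
  move: hfhg; rewrite g1 mulr1 => ->.
  by rewrite polyvecMn polyvec_mulXn1 mul0rn !mxE /mm.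
set m := (beta %/ s)%N.
have bm : beta = (m * s)%N by rewrite divnK.
have fhP : f * h = Pp _ s m.
  apply: (monic_rreg (monic_Xn_sub_1 _ s0)) => /=.
  by rewrite -gs hfhg gs PpM -bm.
have mon := monic_Xn_sub_1 [the nzRingType of 'Z_4] s0.
have dec : forall q, exists A, (size A <= s)%N /\
    forall j : 'I_beta, (polyvec beta (q * w) *+ 2) 0 j = A`_(j %% s).
  move=> q; rewrite U2 fhP -mulrnAl.
  have e := Pdiv.RingMonic.rdivp_eq mon (q *+ 2).
  set A := Pdiv.CommonRing.rmodp _ _ in e.
  set D := Pdiv.CommonRing.rdivp _ _ in e.
  have hA : (size A <= s)%N.
    have := Pdiv.Ring.ltn_rmodp (q *+ 2) ('X^s - 1).
    by rewrite size_Xn_sub_1 // ltnS => ->; rewrite -size_poly_eq0 size_Xn_sub_1.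
  exists A; split => // j.
  rewrite e mulrDl -mulrA [_ * Pp _ _ _]mulrC PpM -bm polyvecD polyvec_mulXn1 add0r.
  have hs := @size_AP _ s m s0 A hA; rewrite -bm in hs.
  by rewrite (polyvec_small hs) coef_AP // -bm ltn_ord.
have [A [hA eA]] := dec q1.
have [B [hB eB]] := dec q2.
set Q := \poly_(i < s) mm A`_i B`_i.
have hQ : (size Q <= s)%N by apply: size_poly.
exists Q; split.
  apply/polyP => i; rewrite coef_map_id0 ?red40 // coef_poly coef0.
  by case: ifP => _; rewrite ?red4mm ?red40.
have Q2 : Q *+ 2 = 0.
  by apply/polyP => i; rewrite coefMn coef_poly coef0; case: ifP => _; rewrite ?mm2 ?mul0rn.
apply/rowP => j; rewrite [RHS]mxE key eA eB.
rewrite /w mulrDr [Q * (2%:R * f)]mulrA mulr_natr Q2 mul0r addr0 fhP.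
have hs := @size_AP _ s m s0 Q hQ; rewrite -bm in hs.
by rewrite (polyvec_small hs) coef_AP // -bm ltn_ord coef_poly ltn_pmod.
Qed.

Theorem mainTheorem7 (alpha beta : nat) (b : {poly 'F_2}) (l : 'rV['F_2]_alpha)
    (f h g : {poly 'Z_4}) :
  (1 <= alpha)%N -> odd beta ->
  f * h * g = 'X^beta - 1 ->
  b %| 'X^alpha - 1 ->
  (g = 1 \/ exists s : nat, [/\ (0 < s)%N, (s %| beta)%N & g = 'X^s - 1]) ->
  linear_binary
    (Gray_image (gen2 (polyvec alpha b, 0 : 'rV['Z_4]_beta)
                      (l, polyvec beta (f * h + 2%:R * f)))).
Proof.
move=> a1 ob hfhg _ hg.
set w := f * h + 2%:R * f.
have b0 : (0 < beta)%N by move: ob; case: (beta).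
set g1 := (polyvec alpha b, 0 : 'rV['Z_4]_beta).
set g2 := (l, polyvec beta w).
have act1 : forall p, act p g1 = (polyvec alpha (map_poly red4 p * vecpoly (polyvec alpha b)), 0).
  by move=> p; rewrite /act /= vecpoly0 mulr0 polyvec0.
have act2 : forall q, act q g2 = (polyvec alpha (map_poly red4 q * vecpoly l), polyvec beta (q * w)).
  move=> q; rewrite /act /=; congr pair.
  by apply: polyvec_mull => //; rewrite polyvec_vecpoly.
have S0 : Gray_image (gen2 g1 g2) 0.
  exists (Radd (act 0 g1) (act 0 g2)); split; first by exists 0, 0.
  by rewrite act1 act2 /Radd /= map_poly0 !mul0r !polyvec0 !addr0 Gray0.
split => //.
  move=> u v [z1 [[p1 [q1 ->]] ->]] [z2 [[p2 [q2 ->]] ->]].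
  have [Q [hQ1 hQ2]] := @claim beta f h g q1 q2 ob hfhg hg.
  exists (Radd (act (p1 + p2) g1) (act (q1 + q2 + Q) g2)); split.
    by exists (p1 + p2), (q1 + q2 + Q).
  rewrite GrayD; congr Gray.
  rewrite !act1 !act2 /Radd /=; congr pair.
    rewrite !map_red4D hQ1 addr0 !mulrDl !polyvecD.
    by rewrite addrACA.
  rewrite !add0r !mulrDl !polyvecD -/w hQ2.
  by [].
move=> c u Su; case: (F2_cases c) => ->; first by rewrite scale0r.
by rewrite scale1r.
Qed.
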